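(* Let $X$ be a Polish space with compatible metric $d$, and let $(\mathcal M_n)_{n\in\mathbb{N}}$ be partitions of $X$, each consisting of at most countably many Borel sets, with $\lim_{n\to\infty}\|\mathcal M_n\|=0$. Let $\mu_n,\mu\in\mathcal P(X)$ satisfy $\mu_n(M)=\mu(M)$ for all $n$ and all $M\in\mathcal M_n$. Then $\mu_n\to\mu$ weakly. If moreover $p\in[1,\infty)$ and $\mu_n,\mu$ have finite $p$-th moments, then $\mu_n\to\mu$ in $\mathcal W_p$.
   Context: The mesh of a partition is $\|\mathcal M\|=\sup_{M\in\mathcal M}\mathrm{diam}(M)$. $\mathcal W_p^p(\alpha,\beta)=\inf_{\gamma\in\mathrm{Cpl}(\alpha,\beta)}\int d^p\,d\gamma$. *)

(* Defs.v *)
From HB Require Import structures.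
From mathcomp Require Import all_boot all_order all_algebra.
From mathcomp Require Import all_classical all_reals all_analysis.
Set Implicit Arguments. Unset Strict Implicit. Unset Printing Implicit Defensive.
Import Order.TTheory GRing.Theory Num.Theory.
Import numFieldNormedType.Exports.
Local Open Scope classical_set_scope.
Local Open Scope ring_scope.

Section Defs.
Context {R : realType} {disp : measure_display} {T : measurableType disp}.
Implicit Types (d : T -> T -> R).

Definition is_metric d : Prop :=
  [/\ (forall x y, 0 <= d x y),
      (forall x y, d x y = 0 <-> x = y),
      (forall x y, d x y = d y x) &
      (forall x y z, d x z <= d x y + d y z)].

Definition dball d (x : T) (e : R) : set T := [set y | d x y < e].

Definition d_open d (U : set T) : Prop :=
  forall x, U x -> exists e : R, 0 < e /\ dball d x e `<=` U.

Definition borel_of_metric d : Prop :=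
  forall A : set T, measurable A <-> <<s d_open d >> A.

Definition d_cauchy d (u : nat -> T) : Prop :=
  forall e : R, 0 < e -> exists N : nat, forall m n, (N <= m)%N -> (N <= n)%N ->
    d (u m) (u n) < e.

Definition d_converges d (u : nat -> T) (l : T) : Prop :=
  forall e : R, 0 < e -> exists N : nat, forall n, (N <= n)%N -> d (u n) l < e.

Definition d_complete d : Prop :=
  forall u, d_cauchy d u -> exists l, d_converges d u l.

Definition d_separable d : Prop :=
  exists D : set T, countable D /\
    forall x (e : R), 0 < e -> exists y, D y /\ d x y < e.

Definition polish_borel d : Prop :=
  [/\ is_metric d, borel_of_metric d, d_complete d & d_separable d].

Definition d_continuous d (f : T -> R) : Prop :=
  forall x (e : R), 0 < e -> exists del : R, 0 < del /\
    forall y, d x y < del -> `|f x - f y| < e.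

Definition weak_conv d (mu : nat -> probability T R) (nu : probability T R) : Prop :=
  forall f : T -> R, d_continuous d f -> (exists C : R, forall x, `|f x| <= C) ->
    (fun n => (\int[mu n]_x (f x)%:E)%E) @ \oo --> (\int[nu]_x (f x)%:E)%E.

Definition countable_borel_partition (P : set (set T)) : Prop :=
  [/\ (forall A, P A -> measurable A), countable P,
      \bigcup_(A in P) A = setT & trivIset P id].

Definition diam d (A : set T) : \bar R :=
  ereal_sup [set (d x y)%:E | x in A & y in A].

Definition mesh d (P : set (set T)) : \bar R := ereal_sup (diam d @` P).

Definition coupling (a b : probability T R) (g : probability (T * T)%type R) : Prop :=
  (forall A, measurable A -> g (A `*` setT) = a A) /\
  (forall B, measurable B -> g (setT `*` B) = b B).

Definition Wpp d (p : R) (a b : probability T R) : \bar R :=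
  ereal_inf [set (\int[g]_z ((d z.1 z.2) `^ p)%:E)%E | g in coupling a b].

Definition Wp d (p : R) (a b : probability T R) : \bar R :=
  ((Wpp d p a b) `^ p^-1)%E.

Definition finite_moment d (p : R) (mu : probability T R) : Prop :=
  exists x0 : T, (\int[mu]_x ((d x0 x) `^ p)%:E < +oo)%E.

End Defs.

(* Main.v *)
Require Import Defs.
From HB Require Import structures.
From mathcomp Require Import all_boot all_order all_algebra.
From mathcomp Require Import all_classical all_reals all_analysis.
From mathcomp Require Import measurable_realfun.
From mathcomp Require Import ring lra.
Import Order.TTheory GRing.Theory Num.Theory.
Import numFieldNormedType.Exports.
Local Open Scope classical_set_scope.
Local Open Scope ring_scope.

Section coupling_sec.
Context {R : realType} {disp : measure_display} {T : measurableType disp}.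
Local Open Scope ereal_scope.

Lemma sum_measure d' (X : measurableType d') (m : {measure set X -> \bar R})
  (F : nat -> set X) :
  (forall k, measurable (F k)) -> trivIset setT F ->
  \sum_(0 <= k <oo) m (F k) = m (\bigcup_k F k).
Proof. by move=> mF tF; apply/cvg_lim => //; exact: measure_sigma_additive. Qed.

Lemma N_mul (mu nu : probability T R) (D : set T) (mD : measurable D) (B : set T) :
  measurable B -> mu D = nu D ->
  mu D * mnormalize (mrestr nu mD) nu B = nu (B `&` D).
Proof.
move=> mB h; have [n0|n0] := eqVneq (nu D) 0.
  rewrite h n0 mul0e; apply/esym/eqP; rewrite eq_le measure_ge0 andbT -n0.
  by apply: le_measure => //; rewrite inE //; exact: measurableI.
have fin : nu D \is a fin_num by exact: fin_num_measure.
have E U : mrestr nu mD U = nu (U `&` D) by [].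
rewrite /mnormalize /= !E setTI (negbTE n0) /=.
have /negbTE -> : nu D != +oo by move: fin; rewrite fin_numE => /andP[].
rewrite /= h -[in X in X * _](fineK fin) muleCA -EFinM divff ?mule1 //.
by rewrite fine_eq0.
Qed.


Lemma coupling_ex (mu nu : probability T R) (F : nat -> set T) :
  (forall k, measurable (F k)) -> trivIset setT F -> \bigcup_k F k = setT ->
  (forall k, mu (F k) = nu (F k)) ->
  exists g : probability (T * T)%type R,
    coupling mu nu g /\ g (~` \bigcup_k (F k `*` F k)) = 0.
Proof.
move=> mF tF cF eF.
pose N k := mnormalize (mrestr nu (mF k)) nu.
pose gk k := (mrestr mu (mF k)) \x (N k).
pose G := mseries gk 0.
have gkX k A B : measurable A -> measurable B ->
    gk k (A `*` B) = mu (A `&` F k) * N k B.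
  by move=> mA mB; rewrite /gk product_measure1E.
have N1 k : N k setT = 1.
  exact: (probability_setT (mnormalize (mrestr nu (mF k)) nu)).
have tI A : trivIset setT (fun k => A `&` F k).
  by move=> i j _ _ [x [[_ xi] [_ xj]]]; apply: tF => //; exists x.
have G1 A : measurable A -> G (A `*` setT) = mu A.
  move=> mA; rewrite /G /mseries.
  transitivity (\sum_(0 <= k <oo) mu (A `&` F k)).
    apply: eq_eseriesr => k _. by rewrite -[LHS]/(gk k (A `*` setT)) gkX // N1 mule1.
  rewrite sum_measure //; first by rewrite -setI_bigcupr cF setIT.
  by move=> k; exact: measurableI.
have G2 B : measurable B -> G (setT `*` B) = nu B.
  move=> mB; rewrite /G /mseries.
  transitivity (\sum_(0 <= k <oo) nu (B `&` F k)).
    by apply: eq_eseriesr => k _; rewrite -[LHS]/(gk k (setT `*` B)) gkX // setTI /N N_mul.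
  rewrite sum_measure //; first by rewrite -setI_bigcupr cF setIT.
  by move=> k; exact: measurableI.
have GT : G setT = 1 by rewrite -setXTT G1 // probability_setT.
pose g := mnormalize G (@dirac _ _ (point : (T * T)%type) R).
have gG A : g A = G A.
  rewrite /g /mnormalize /=.
  have -> : mseries (fun k => gk k) 0 setT = 1 by exact: GT.
  rewrite onee_eq0 /=.
  by rewrite [X in _ * X](_ : _ = 1) ?mule1 //= invr1.
exists g.
split.
  split => A mA.
    by rewrite -(G1 A mA); exact: gG.
  by rewrite -(G2 A mA); exact: gG.
have mS : measurable (\bigcup_k (F k `*` F k)).
  by apply: bigcupT_measurable => k; exact: measurableX.
transitivity (G (~` \bigcup_k (F k `*` F k))); first exact: gG.
rewrite /G /mseries (eq_eseriesr (g := fun=> 0)) ?eseries0 // => k _.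
have sub : ~` (\bigcup_k (F k `*` F k)) `<=` (~` F k `*` setT) `|` (setT `*` ~` F k).
  move=> [x y] /= nS.
  have : ~ (F k x /\ F k y) by move=> [? ?]; apply: nS; exists k.
  by move=> /not_andP [?|?]; [left|right].
apply/eqP; rewrite eq_le measure_ge0 andbT.
apply: (le_trans (le_measure _ _ _ sub)); rewrite ?inE.
- exact: measurableC.
- by apply: measurableU; apply: measurableX => //; exact: measurableC.
apply: (le_trans (measureU2 _ _ _)); try (by apply: measurableX => //; exact: measurableC).
rewrite -[X in X + _]/(gk k (~` F k `*` setT)) -[X in _ + X]/(gk k (setT `*` ~` F k)).
rewrite !gkX //; try exact: measurableC.
have E0 (A : set T) : ~` A `&` A = set0 by apply/seteqP; split => x // [].
have E1 (A : set T) : A `&` ~` A = set0 by apply/seteqP; split => x // [].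
rewrite E0 measure0 mul0e add0e setTI /N N_mul //.
  by rewrite E0 measure0.
exact: measurableC.
Qed.

End coupling_sec.
Section enum_sec.
Context {R : realType} {disp : measure_display} {T : measurableType disp}.
Local Open Scope ereal_scope.

Lemma enum_partition (P : set (set T)) : countable_borel_partition P ->
  exists F : nat -> set T, [/\ (forall k, measurable (F k)),
    (forall k, F k = set0 \/ P (F k)), trivIset setT F & \bigcup_k F k = setT].
Proof.
rewrite /countable_borel_partition => -[mP cP cov tP].
have /countable_injP [f finj] := cP.
pose F k := match pselect (exists M, P M /\ f M = k) with
  | left h => proj1_sig (cid h) | right _ => set0 end.
have FP k : F k = set0 \/ (P (F k) /\ f (F k) = k).
  rewrite /F; case: pselect => [h|_]; last by left.
  by right; case: cid => M [PM fM].
have FM M : P M -> F (f M) = M.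
  move=> PM; rewrite /F; case: pselect => [h|nh]; last by exfalso; apply: nh; exists M.
  case: cid => M' [PM' fM'] /=; by apply: finj; rewrite ?inE // fM'.
exists F; split.
- by move=> k; case: (FP k) => [->|[PF _]]; [exact: measurable0|exact: mP].
- by move=> k; case: (FP k) => [->|[PF _]]; [left|right].
- move=> i j _ _ [x [xi xj]].
  case: (FP i) => [Fi0|[Pi fi]]; first by rewrite Fi0 in xi.
  case: (FP j) => [Fj0|[Pj fj]]; first by rewrite Fj0 in xj.
  have E : F i = F j by apply: tP => //; exists x.
  by rewrite -fi -fj E.
- apply/seteqP; split => x // _.
  have : (\bigcup_(A in P) A) x by rewrite cov.
  by case=> M PM Mx; exists (f M) => //; rewrite FM.
Qed.

Lemma cell_mesh (d : T -> T -> R) (P : set (set T)) (F : nat -> set T) k x y :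
  (forall k, F k = set0 \/ P (F k)) -> F k x -> F k y -> (d x y)%:E <= mesh d P.
Proof.
move=> FP; case: (FP k) => [->//|PF] xF yF.
apply: (le_trans _ (ereal_sup_ubound _)); last by exists (F k).
by apply: ereal_sup_ubound; exists x => //; exists y.
Qed.

End enum_sec.
Section W_sec.
Context {R : realType} {disp : measure_display} {T : measurableType disp}.
Local Open Scope ereal_scope.

Lemma measurable_piecewise d' (X : measurableType d') d'' (Y : measurableType d'')
  (G : nat -> set X) (h : X -> Y) : (forall k, measurable (G k)) ->
  \bigcup_k G k = setT -> (forall k x y, G k x -> G k y -> h x = h y) ->
  measurable_fun setT h.
Proof.
move=> mG cG hc _ B mB; rewrite setTI.
have -> : h @^-1` B = \bigcup_k (G k `&` h @^-1` B) by rewrite -setI_bigcupl cG setTI.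
apply: bigcupT_measurable => k.
case: (pselect (exists x, G k x /\ B (h x))) => [[x [Gx Bx]]|nx].
  have -> : G k `&` h @^-1` B = G k; last exact: mG.
  apply/seteqP; split => [y [] //| y Gy]; split => //.
  by rewrite /preimage /= (hc k y x).
have -> : G k `&` h @^-1` B = set0; last exact: measurable0.
by apply/seteqP; split => [y [Gy By]|//]; exfalso; apply: nx; exists y.
Qed.

Lemma integral_le_cst (g : probability (T * T)%type R) (S : set (T * T)) (phi : T * T -> \bar R) (a : R) :
  measurable S -> g (~` S) = 0 -> (forall z, 0 <= phi z) ->
  (forall z, S z -> phi z <= a%:E) -> (0 <= a)%R ->
  \int[g]_z phi z <= a%:E.
Proof.
move=> mS gS0 phi0 phia a0.
pose psi : (T * T)%type -> \bar R := fun z => if z \in S then a%:E else +oo.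
have psi0 z : 0 <= psi z by rewrite /psi; case: ifP => _; rewrite ?lee_fin ?leey.
have le1 : \int[g]_z phi z <= \int[g]_z psi z.
  rewrite !ge0_integralTE //; apply: ereal_sup_le => _ [h hle <-].
  exists h => // x; apply: (le_trans (hle x)); rewrite /psi.
  by case: ifPn => [/set_mem /phia//|_]; exact: leey.
apply: (le_trans le1).
have mpsi : measurable_fun setT psi.
  apply: (@measurable_piecewise _ _ _ (\bar R) (fun k => if k is 0%N then S else ~` S) psi).
  - by case=> [|k] //; exact: measurableC.
  - by apply/seteqP; split => z // _; case: (pselect (S z)) => Sz; [exists 0%N|exists 1%N].
  - by case=> [|k] x y /= Gx Gy; rewrite /psi; [rewrite !mem_set|rewrite !memNset].
rewrite (ae_eq_integral (cst a%:E)) //.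
- rewrite integral_cst //; set u := (X in _ * X).
  have -> : u = 1 by exact: probability_setT.
  by rewrite mule1.
- exists (~` S); split => //; first exact: measurableC.
  by move=> z /= nz Sz; apply: nz => _; rewrite /psi mem_set.
Qed.


Lemma Wp_le (d : T -> T -> R) (p : R) (mu nu : probability T R) (F : nat -> set T) (c : R) :
  (0 < p)%R -> (0 <= c)%R -> (forall x y, (0 <= d x y)%R) ->
  (forall k, measurable (F k)) -> trivIset setT F -> \bigcup_k F k = setT ->
  (forall k, mu (F k) = nu (F k)) ->
  (forall k x y, F k x -> F k y -> (d x y <= c)%R) ->
  0 <= Wp d p mu nu <= c%:E.
Proof.
move=> p0 c0 d0 mF tF cF eF Fc.
have [g [cg g0]] := coupling_ex mu nu F mF tF cF eF.
have hW : 0 <= Wpp d p mu nu <= (c `^ p)%:E.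
  apply/andP; split.
    apply: le_ereal_inf_tmp => _ [g' _ <-].
    by apply: integral_ge0 => z _; rewrite lee_fin powR_ge0.
  apply: le_trans (ereal_inf_lbound _) _; first by exists g.
  apply: (integral_le_cst g (\bigcup_k (F k `*` F k))) => //.
  - by apply: bigcupT_measurable => k; exact: measurableX.
  - by move=> z; rewrite lee_fin powR_ge0.
  - move=> [x y] [k _ [/= xF yF]]; rewrite lee_fin.
    by apply: ge0_ler_powR; rewrite ?nnegrE ?(ltW p0) ?d0 //; exact: Fc xF yF.
  - exact: powR_ge0.
rewrite /Wp; move: (Wpp d p mu nu) hW => w.
case: w => [wr||] //= /andP[h1 h2].
- rewrite !lee_fin powR_ge0 /=.
  have : (wr `^ p^-1 <= (c `^ p) `^ p^-1)%R.
    by apply: ge0_ler_powR; rewrite ?nnegrE ?invr_ge0 ?(ltW p0) ?powR_ge0 // -lee_fin.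
  by rewrite -powRrM mulfV ?gt_eqF // powRr1.
- by move: h2; rewrite leye_eq.
Qed.

End W_sec.
Section weak_sec.
Context {R : realType}.
Local Open Scope ereal_scope.

Lemma int_bnd d' (X : measurableType d') (g : probability X R) (f : X -> R) (C : R) :
  measurable_fun setT f -> (forall x, `|f x| <= C)%R ->
  g.-integrable setT (EFin \o f).
Proof.
move=> mf fC.
apply: (@le_integrable _ _ _ g _ measurableT _ (EFin \o cst C)).
- exact/measurable_EFinP.
- by move=> z _ /=; rewrite lee_fin (le_trans (fC _)) // ler_norm.
- exact: (@finite_measure_integrable_cst _ _ _ g setT C measurableT).
Qed.

Context {disp : measure_display} {T : measurableType disp}.

Lemma transfer_fst (g : probability (T * T)%type R) (mu : probability T R)
  (f : T -> R) (C : R) :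
  (forall A, measurable A -> g (A `*` setT) = mu A) -> measurable_fun setT f ->
  (forall x, `|f x| <= C)%R ->
  \int[mu]_x (f x)%:E = \int[g]_z (f z.1)%:E.
Proof.
move=> gm mf fC.
rewrite (@eq_measure_integral _ _ _ setT (pushforward g fst)); last first.
  move=> A mA _; rewrite /pushforward; transitivity (g (A `*` setT)).
    exact/esym/gm.
  congr (g _).
  by apply/seteqP; split => -[x y] //= [].
rewrite integral_pushforward //=.
- by apply/measurable_EFinP.
- have mfi : measurable_fun setT (fun z : T * T => f z.1).
    apply: measurableT_comp => //; exact: measurable_fst.
  exact: (int_bnd _ _ g (fun z => f z.1) C mfi (fun z => fC z.1)).
Qed.

Lemma transfer_snd (g : probability (T * T)%type R) (mu : probability T R)
  (f : T -> R) (C : R) :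
  (forall A, measurable A -> g (setT `*` A) = mu A) -> measurable_fun setT f ->
  (forall x, `|f x| <= C)%R ->
  \int[mu]_x (f x)%:E = \int[g]_z (f z.2)%:E.
Proof.
move=> gm mf fC.
rewrite (@eq_measure_integral _ _ _ setT (pushforward g snd)); last first.
  move=> A mA _; rewrite /pushforward; transitivity (g (setT `*` A)).
    exact/esym/gm.
  congr (g _).
  by apply/seteqP; split => -[x y] //= [].
rewrite integral_pushforward //=.
- by apply/measurable_EFinP.
- have mfi : measurable_fun setT (fun z : T * T => f z.2).
    apply: measurableT_comp => //; exact: measurable_snd.
  exact: (int_bnd _ _ g (fun z => f z.2) C mfi (fun z => fC z.2)).
Qed.

Lemma weak_bound (mu nu : probability T R) (F : nat -> set T) (f h : T -> R) (C : R) :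
  measurable_fun setT f -> measurable_fun setT h -> (forall x, `|f x| <= C)%R ->
  (forall k, measurable (F k)) -> trivIset setT F -> \bigcup_k F k = setT ->
  (forall k, mu (F k) = nu (F k)) ->
  (forall k a b, F k a -> F k b -> `|f a - f b| <= h b)%R ->
  (forall x, 0 <= h x /\ h x <= C + C)%R ->
  `| \int[mu]_x (f x)%:E - \int[nu]_x (f x)%:E | <= \int[nu]_x (h x)%:E.
Proof.
move=> mf mh fC mF tF cF eF fh hC'.
have hC x : (`|h x| <= C + C)%R by have [h0 h1] := hC' x; rewrite ger0_norm.
have [g [[g1 g2] g0]] := coupling_ex mu nu F mF tF cF eF.
have mf1 : measurable_fun setT (fun z : T * T => f z.1).
  apply: measurableT_comp => //; exact: measurable_fst.
have mf2 : measurable_fun setT (fun z : T * T => f z.2).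
  apply: measurableT_comp => //; exact: measurable_snd.
rewrite (transfer_fst g mu f C g1 mf fC) (transfer_snd g nu f C g2 mf fC) (transfer_snd g nu h (C + C) g2 mh hC).
rewrite -integralB_EFin //; last 2 first.
- exact: (int_bnd _ _ g (fun z => f z.1) C mf1 (fun z => fC z.1)).
- exact: (int_bnd _ _ g (fun z => f z.2) C mf2 (fun z => fC z.2)).
apply: le_trans (le_abse_integral _ _ _) _ => //.
  by apply/measurable_EFinP; exact: measurable_funB.
apply: ae_ge0_le_integral => //.
- by apply: measurableT_comp => //; apply/measurable_EFinP; exact: measurable_funB.
- by move=> z _; rewrite lee_fin; case: (hC' z.2).
- apply/measurable_EFinP; apply: measurableT_comp => //; exact: measurable_snd.
exists (~` \bigcup_k (F k `*` F k)); split => //.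
  by apply/measurableC/bigcupT_measurable => k; exact: measurableX.
move=> [a b] /= nz [k _ [/= Fa Fb]]; apply: nz => _.
by rewrite lee_fin (fh k).
Qed.

End weak_sec.
Section main_sec.
Context {R : realType} {disp : measure_display} {T : measurableType disp}.

Lemma cont_meas (d : T -> T -> R) (f : T -> R) :
  borel_of_metric d -> d_continuous d f -> measurable_fun setT f.
Proof.
move=> bor cf; apply: (measurability _ (RGenOpens.measurableE R)).
move=> _ [_ [x [y ->]] <-]; apply/bor; apply: sub_sigma_algebra.
move=> z [_ /=]; rewrite in_itv /= => /andP[xz zy].
have e0 : 0 < Num.min (f z - x) (y - f z) by rewrite lt_min !subr_gt0 xz zy.
have [del [del0 hd]] := cf z _ e0.
exists del; split => // w /hd; rewrite lt_min => /andP[h1 h2]; split => //=.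
rewrite in_itv /=; apply/andP; split.
  by move: h1; rewrite ltr_norml => /andP[? ?]; lra.
by move: h2; rewrite ltr_norml => /andP[? ?]; lra.
Qed.


Definition osc (f : T -> R) (F : nat -> set T) (y : T) : R :=
  sup [set r | exists k a b, [/\ F k y, F k a, F k b & r = `|f a - f b|]].

Lemma osc_ub (f : T -> R) (C : R) (F : nat -> set T) k y a b :
  (forall x, `|f x| <= C) -> F k y -> F k a -> F k b -> `|f a - f b| <= osc f F y.
Proof.
move=> fC yF aF bF; apply: ub_le_sup; last by exists k, a, b.
exists (C + C) => _ [k' [a' [b' [_ _ _ ->]]]].
by apply: (le_trans (ler_normB _ _)); exact: lerD.
Qed.

Lemma osc_le (f : T -> R) (F : nat -> set T) k y (e : R) :
  trivIset setT F -> F k y ->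
  (forall a b, F k a -> F k b -> `|f a - f b| <= e) -> osc f F y <= e.
Proof.
move=> tF yF he; apply: ge_sup; first by exists `|f y - f y|, k, y, y.
move=> _ [k' [a [b [yk' ak' bk' ->]]]].
have kk : k' = k by apply: tF => //; exists y.
by subst k'; exact: he.
Qed.

Lemma osc_const (f : T -> R) (F : nat -> set T) k y y' :
  trivIset setT F -> F k y -> F k y' -> osc f F y = osc f F y'.
Proof.
move=> tF yF y'F; rewrite /osc; congr sup.
apply/seteqP; split => _ [k' [a [b [yk' ak' bk' ->]]]].
- have kk : k' = k by apply: tF => //; exists y.
  by subst k'; exists k, a, b.
- have kk : k' = k by apply: tF => //; exists y'.
  by subst k'; exists k, a, b.
Qed.

End main_sec.
Arguments osc_ub {R disp T f C F k y a b}.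
Arguments osc_le {R disp T f F k y e}.
Arguments osc_const {R disp T f F k y y'}.
Arguments cont_meas {R disp T d f}.
Arguments measurable_piecewise {d' X d'' Y G h}.

Theorem lemma2p4 (R : realType) (disp : measure_display) (T : measurableType disp)
  (d : T -> T -> R) (M : nat -> set (set T))
  (mu : nat -> probability T R) (nu : probability T R) :
  polish_borel d ->
  (forall n, countable_borel_partition (M n)) ->
  mesh d (M n) @[n --> \oo] --> 0%E ->
  (forall n A, M n A -> mu n A = nu A) ->
  weak_conv d mu nu /\
  (forall p : R, 1 <= p ->
     (forall n, finite_moment d p (mu n)) -> finite_moment d p nu ->
     Wp d p (mu n) nu @[n --> \oo] --> 0%E).
Proof.
move=> [dm bor _ _] Mp mesh0 eqM.
have [d0 _ _ _] := dm.
have /choice [Fs HF] : forall n, exists F : nat -> set T, [/\ (forall k, measurable (F k)),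
    (forall k, F k = set0 \/ M n (F k)), trivIset setT F & \bigcup_k F k = setT].
  by move=> n; exact: enum_partition (Mp n).
have eqF n k : mu n (Fs n k) = nu (Fs n k).
  have [_ FP _ _] := HF n.
  by case: (FP k) => [->|]; [rewrite !measure0|exact: eqM].
have [finM mcvg] := (fine_cvgP _ _).1 mesh0.
pose m n := fine (mesh d (M n)).
have cellb : \forall n \near \oo, forall k x y, Fs n k x -> Fs n k y -> d x y <= `|m n|.
  apply: filterS finM => n fn k x y xF yF.
  have [_ FP _ _] := HF n.
  have := cell_mesh d (M n) (Fs n) k x y FP xF yF.
  rewrite -(fineK fn) lee_fin => /le_trans; apply; exact: ler_norm.
split.
  move=> f cf [C fC].
  have mf := cont_meas bor cf.
  have C0 : 0 <= C := le_trans (normr_ge0 _) (fC point).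
  pose h n := osc f (Fs n).
  have hC n x : 0 <= h n x /\ h n x <= C + C.
    have [_ _ tF cF] := HF n.
    have : (\bigcup_k Fs n k) x by rewrite cF.
    case=> k _ xk; split.
      by apply: le_trans (osc_ub fC xk xk xk); rewrite normr_ge0.
    apply: (osc_le tF xk) => a b _ _.
    by apply: (le_trans (ler_normB _ _)); exact: lerD.
  have mh n : measurable_fun setT (h n).
    have [mF _ tF cF] := HF n.
    apply: (measurable_piecewise (G := Fs n)) => // k x y xk yk.
    exact: osc_const xk yk.
  have fin_b : (\int[nu]_x (f x)%:E)%E \is a fin_num.
    exact: integrable_fin_num (int_bnd _ _ nu f C mf fC).
  apply/(sube_cvg0 _ fin_b)/cvg_abse0P.
  apply: (@squeeze_cvge _ _ _ _ (cst 0%E) _ (fun n => (\int[nu]_x (h n x)%:E)%E)).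
  - apply: nearW => n; rewrite abse_ge0 /=.
    have [mF _ tF cF] := HF n.
    apply: (weak_bound (mu n) nu (Fs n) f (h n) C mf (mh n) fC mF tF cF (eqF n)) => //.
    by move=> k a b ak bk; exact: (osc_ub fC bk ak bk).
  - exact: cvg_cst.
  - have ff : forall x, setT x -> (fun n => (h n x)%:E) @ \oo --> (cst 0%E x).
      move=> x _.
      apply: (proj2 (fine_cvgP (fun n => (h n x)%:E) 0%R)); split; first exact: nearW.
      apply/cvgrPdist_le => /= e e0.
      have e2 : 0 < e / 2 by rewrite divr_gt0.
      have [del [del0 hd]] := cf x _ e2.
      apply: (@filterS2 _ _ _ _ _ _ _ cellb (cvgr0_norm_lt _ mcvg _ del0)) => n cb lt.
      rewrite sub0r normrN (ger0_norm (hC n x).1).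
      have [_ _ tF cF] := HF n.
      have : (\bigcup_k Fs n k) x by rewrite cF.
      case=> k _ xk.
      apply: (osc_le tF xk) => a b ak bk.
      have h1 := hd a (le_lt_trans (cb k x a xk ak) lt).
      have h2 := hd b (le_lt_trans (cb k x b xk bk) lt).
      have := ler_normB (f x - f b) (f x - f a).
      rewrite (_ : f x - f b - (f x - f a) = f a - f b); last by ring.
      lra.
    have fg : {ae nu, forall x n, setT x -> (`|(h n x)%:E| <= (cst (C + C)%:E) x)%E}.
      apply: aeW => x n _; rewrite /= lee_fin ger0_norm; case: (hC n x) => //.
    have [_ _ hcv] := @dominated_convergence _ _ _ nu setT measurableT
      (fun n x => (h n x)%:E) (cst 0%E) (cst (C + C)%:E)
      (fun n => proj2 (measurable_EFinP _ _) (mh n)) (measurable_cst _)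
      (aeW nu ff) (finite_measure_integrable_cst nu (C + C) measurableT) fg.
    by rewrite integral0 in hcv.
move=> p p1 _ _.
apply: (@squeeze_cvge _ _ _ _ (cst 0%E) _ (fun n => (`|m n|)%:E)).
- apply: filterS cellb => n cb; have [mF _ tF cF] := HF n.
  have p0 : 0 < p by apply: lt_le_trans p1.
  exact: (Wp_le d p (mu n) nu (Fs n) `|m n| p0 (normr_ge0 _) d0 mF tF cF (eqF n) cb).
- exact: cvg_cst.
- apply: (proj2 (fine_cvgP (fun n => (`|m n|)%:E) 0%R)).
  split.
    by apply: nearW.
  have h := cvg_norm mcvg; rewrite normr0 in h.
  exact: h.
Qed.
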